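(* Every second-order polynomial has a description.
   Context: Second-order polynomials are the smallest class of functions $P\colon\mathbb N^{\mathbb N}\times\mathbb N\to\mathbb N$ that contains all $(l,n)\mapsto p(n)$ for polynomials $p$ with natural-number coefficients, and is closed under pointwise sum, pointwise product, and $P\mapsto P^+$ with $P^+(l,n)=l(P(l,n))$. A polynomial tree is a finite rooted tree in which each node is labeled by a polynomial in $\mathbb N[X_0,\ldots,X_k]$, where $k$ is the number of children of that node, and the children of each node are linearly ordered. To each node one recursively assigns a function $\mathbb N^{\mathbb N}\times\mathbb N\to\mathbb N$: a leaf labeled $t\in\mathbb N[X_0]$ gets $(l,n)\mapsto t(n)$; a node labeled $t$ whose children (in order) were assigned $P_1,\ldots,P_k$ gets $(l,n)\mapsto t(n,l(P_1(l,n)),\ldots,l(P_k(l,n)))$. A polynomial tree is a description of $P$ if $P$ is assigned to its root. *)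

(* Defs.v *)
From Stdlib Require Import List Arith.
Import ListNotations.

(* Polynomials with natural-number coefficients, as syntactic expressions
   in variables X_0, X_1, ...  Every polynomial in N[X_0,...,X_k] is denoted
   by such an expression using only variables of index <= k, and conversely. *)
Inductive npoly : Type :=
| PConst : nat -> npoly
| PVar : nat -> npoly
| PAdd : npoly -> npoly -> npoly
| PMul : npoly -> npoly -> npoly.

Fixpoint vars_lt (m : nat) (p : npoly) : Prop :=
  match p with
  | PConst _ => True
  | PVar i => i < m
  | PAdd p q => vars_lt m p /\ vars_lt m q
  | PMul p q => vars_lt m p /\ vars_lt m q
  end.

(* evaluation at the point (x_0, x_1, ...) given as a list (missing = 0) *)
Fixpoint peval (p : npoly) (xs : list nat) : nat :=
  match p with
  | PConst c => c
  | PVar i => nth i xs 0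
  | PAdd p q => peval p xs + peval q xs
  | PMul p q => peval p xs * peval q xs
  end.

Definition SOfun := (nat -> nat) -> nat -> nat.

Inductive second_order_poly : SOfun -> Prop :=
| sop_poly (p : npoly) : vars_lt 1 p ->
    second_order_poly (fun l n => peval p [n])
| sop_add (P Q : SOfun) : second_order_poly P -> second_order_poly Q ->
    second_order_poly (fun l n => P l n + Q l n)
| sop_mul (P Q : SOfun) : second_order_poly P -> second_order_poly Q ->
    second_order_poly (fun l n => P l n * Q l n)
| sop_plus (P : SOfun) : second_order_poly P ->
    second_order_poly (fun l n => l (P l n)).

Inductive ptree : Type :=
| PNode : npoly -> list ptree -> ptree.

Fixpoint ptree_wf (t : ptree) : Prop :=
  match t with
  | PNode p ch => vars_lt (S (length ch)) p /\
      (fix all_wf (ts : list ptree) : Prop :=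
         match ts with
         | [] => True
         | u :: us => ptree_wf u /\ all_wf us
         end) ch
  end.

Fixpoint ptree_fun (t : ptree) (l : nat -> nat) (n : nat) : nat :=
  match t with
  | PNode p ch => peval p (n :: map (fun u => l (ptree_fun u l n)) ch)
  end.

Definition describes (t : ptree) (P : SOfun) : Prop :=
  ptree_wf t /\ forall l n, ptree_fun t l n = P l n.

(* Main.v *)
Require Import Defs.
From Stdlib Require Import List Arith Lia.
Import ListNotations.

Fixpoint shiftp (k : nat) (p : npoly) : npoly :=
  match p with
  | PConst c => PConst c
  | PVar 0 => PVar 0
  | PVar (S i) => PVar (S (k + i))
  | PAdd p q => PAdd (shiftp k p) (shiftp k q)
  | PMul p q => PMul (shiftp k p) (shiftp k q)
  end.

Lemma peval_shift p : forall n xs ys,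
  peval (shiftp (length xs) p) (n :: xs ++ ys) = peval p (n :: ys).
Proof.
  induction p; intros; simpl; try rewrite IHp1, IHp2; auto.
  destruct n as [|i]; simpl; auto. apply app_nth2_plus.
Qed.

Lemma vars_shift p : forall k m, vars_lt (S m) p -> vars_lt (S (k + m)) (shiftp k p).
Proof.
  induction p; simpl; intros; try (destruct H; split; auto).
  destruct n; simpl in *; lia.
Qed.

Lemma peval_app p : forall l ys, vars_lt (length l) p -> peval p (l ++ ys) = peval p l.
Proof.
  induction p; simpl; intros; try (destruct H; rewrite IHp1, IHp2 by auto); auto.
  apply app_nth1; auto.
Qed.

Lemma vars_mono p : forall m m', m <= m' -> vars_lt m p -> vars_lt m' p.
Proof. induction p; simpl; intros; try lia; firstorder. Qed.

Fixpoint allwf (ts : list ptree) : Prop :=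
  match ts with [] => True | u :: us => ptree_wf u /\ allwf us end.

Lemma wf_eq p ch : ptree_wf (PNode p ch) <-> vars_lt (S (length ch)) p /\ allwf ch.
Proof. change (vars_lt (S (length ch)) p /\ allwf ch <-> vars_lt (S (length ch)) p /\ allwf ch). tauto. Qed.

Lemma allwf_app a b : allwf a -> allwf b -> allwf (a ++ b).
Proof. induction a; simpl; tauto. Qed.

Lemma combine (op : npoly -> npoly -> npoly) (f : nat -> nat -> nat)
  (Hvars : forall m p q, vars_lt m p -> vars_lt m q -> vars_lt m (op p q))
  (Hev : forall p q xs, peval (op p q) xs = f (peval p xs) (peval q xs))
  P Q : (exists t, describes t P) -> (exists t, describes t Q) ->
  exists t, describes t (fun l n => f (P l n) (Q l n)).
Proof.
  intros [[p1 c1] [W1 E1]] [[p2 c2] [W2 E2]].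
  apply wf_eq in W1, W2. destruct W1 as [V1 A1], W2 as [V2 A2].
  exists (PNode (op p1 (shiftp (length c1) p2)) (c1 ++ c2)). split.
  - apply wf_eq. split; [|apply allwf_app; auto].
    apply Hvars.
    + eapply vars_mono; [|exact V1]. rewrite app_length; lia.
    + rewrite app_length. apply vars_shift; auto.
  - intros l n. rewrite <- E1, <- E2. simpl. rewrite Hev, map_app.
    f_equal.
    + change (n :: map (fun u => l (ptree_fun u l n)) c1 ++ map (fun u => l (ptree_fun u l n)) c2)
        with ((n :: map (fun u => l (ptree_fun u l n)) c1) ++ map (fun u => l (ptree_fun u l n)) c2).
      apply peval_app. simpl. rewrite map_length. auto.
    + rewrite <- (map_length (fun u => l (ptree_fun u l n)) c1) at 1.
      apply peval_shift.
Qed.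

Theorem mainTheorem3 (P : (nat -> nat) -> nat -> nat) :
  second_order_poly P -> exists t : ptree, describes t P.
Proof.
  induction 1.
  - exists (PNode p []). split; [apply wf_eq; simpl; auto | reflexivity].
  - apply (combine PAdd Nat.add); simpl; auto.
  - apply (combine PMul Nat.mul); simpl; auto.
  - destruct IHsecond_order_poly as [t [W E]].
    exists (PNode (PVar 1) [t]). split.
    + apply wf_eq; simpl; auto.
    + intros l n. simpl. rewrite E. reflexivity.
Qed.
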